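(* Let $m,n$ be positive integers such that $n$ reduces to $m$. Let $a$ be the smallest integer with $2^am\ge n$. Then $|\mathcal{M}_x(n)|\le|\mathcal{M}_x(2^am)|$ for all $x\in\mathbb{R}$.
   Context: For a positive integer $n$, $\mathcal{D}(n)$ is the set of positive divisors of $n$, and $\lambda(n)$ is the least prime factor of $n$ if $n\ge2$, with $\lambda(1)=1$. For positive integers $m,n$, a function $f:\mathcal{D}(n)\to\mathcal{D}(m)$ is called reducing if for all $d,d'\in\mathcal{D}(n)$: (a) $f(d)\le d$; (b) $\frac{m/f(d)}{n/d}\le\min\{1,\ \lambda(m/f(d))/\lambda(n/d)\}$; (c) if $f(d)=2^if(d')$ for some $i\in\mathbb{Z}$, then $d=2^jd'$ for some $j\in\mathbb{Z}$. We say $n$ reduces to $m$ if a reducing function $\mathcal{D}(n)\to\mathcal{D}(m)$ exists. For $x\in\mathbb{R}$, a positive divisor $d$ of $n$ is maximal with respect to $x$ if $d\le x$ and there is no other positive divisor $d'$ of $n$ with $d'\le x$ and $d\mid d'$; $\mathcal{M}_x(n)$ denotes the set of such divisors. *)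

(* Defs.v *)
From mathcomp Require Import all_boot all_order all_algebra.
From mathcomp Require Import reals.
Set Implicit Arguments. Unset Strict Implicit. Unset Printing Implicit Defensive.
Import Order.TTheory GRing.Theory Num.Theory.
Local Open Scope ring_scope.

(* lambda(n): least prime factor of n >= 2, with lambda(1) = 1.
   MathComp's [pdiv] is exactly this (pdiv 1 = 1). *)
Definition lpf (n : nat) : nat := pdiv n.

(* f : D(n) -> D(m) is represented by a total function nat -> nat,
   constrained only on the positive divisors of n (n > 0 assumed where used). *)
Definition reducing (n m : nat) (f : nat -> nat) : Prop :=
  (forall d, (d %| n)%N -> (f d %| m)%N) /\
  (forall d, (d %| n)%N -> (f d <= d)%N) /\
  (forall d, (d %| n)%N ->
     ((m %/ f d)%:R / (n %/ d)%:R : rat)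
       <= Num.min 1 ((lpf (m %/ f d))%:R / (lpf (n %/ d))%:R)) /\
  (forall d d', (d %| n)%N -> (d' %| n)%N ->
     (exists i : int, ((f d)%:R : rat) = 2%:R ^ i * (f d')%:R) ->
     exists j : int, (d%:R : rat) = 2%:R ^ j * d'%:R).

Definition reduces (n m : nat) : Prop := exists f : nat -> nat, reducing n m f.

(* M_x(n): the divisors d of n with d <= x such that no other divisor d' of n
   with d' <= x is a multiple of d. (divisors n is duplicate-free.) *)
Definition Mx (R : realType) (x : R) (n : nat) : seq nat :=
  [seq d <- divisors n |
     (d%:R <= x) &&
     all (fun d' => (d'%:R <= x) ==> (d %| d')%N ==> (d' == d)) (divisors n)].

(* Main.v *)
Require Import Defs.
From mathcomp Require Import all_boot all_order all_algebra.
From mathcomp Require Import reals.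
From mathcomp Require Import zify.
Import Order.TTheory GRing.Theory Num.Theory.
Local Open Scope ring_scope.

Fixpoint findk (P : pred nat) (k : nat) : nat :=
  if P k then k else if k is k'.+1 then findk P k' else 0%N.

Lemma findk_le (P : pred nat) k : (findk P k <= k)%N.
Proof. elim: k => [|k IH] /=; case: (P _) => //; exact: leqW. Qed.

Lemma findk_P (P : pred nat) k : P 0%N -> P (findk P k).
Proof. move=> P0; elim: k => [|k IH] /=; case: ifP => //. Qed.

Lemma findk_max (P : pred nat) k j : (j <= k)%N -> P j -> (j <= findk P k)%N.
Proof.
elim: k => [|k IH] /=.
  by rewrite leqn0 => /eqP ->; case: ifP.
case: ifP => // Pk; rewrite leq_eqVlt => /orP [/eqP Ej|]; first by rewrite Ej Pk.
by rewrite ltnS => jk Pj; apply: IH.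
Qed.

Section S.
Variable R : realType.
Variable x : R.

Lemma Mx_div n d : (0 < n)%N -> d \in Mx x n -> (d %| n)%N /\ d%:R <= x /\
  (forall d', (d' %| n)%N -> d'%:R <= x -> (d %| d')%N -> d' = d).
Proof.
move=> n0; rewrite mem_filter => /andP [] /andP [] dx /allP H dn.
rewrite -dvdn_divisors // in dn; split => //; split => // d' d'n d'x dd'.
have := H d'; rewrite -dvdn_divisors // => /(_ d'n); rewrite d'x dd' /=.
by move/eqP.
Qed.

Lemma Mx_in n d : (0 < n)%N -> (d %| n)%N -> d%:R <= x ->
  (forall p, prime p -> (d * p %| n)%N -> x < (d * p)%:R) -> d \in Mx x n.
Proof.
move=> n0 dn dx H; rewrite mem_filter -dvdn_divisors // dn dx andbT /=.
apply/allP => d'; rewrite -dvdn_divisors // => d'n.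
apply/implyP => d'x; apply/implyP => /dvdnP [t Et].
have d'0 : (0 < d')%N by apply: dvdn_gt0 d'n.
have d0 : (0 < d)%N by apply: dvdn_gt0 n0 dn.
have t0 : (0 < t)%N by move: d'0; rewrite Et muln_gt0 => /andP[].
have [t1|t1] := leqP t 1.
  by apply/eqP; rewrite Et (_ : t = 1%N) ?mul1n //; lia.
have pp := pdiv_prime t1.
have dpd' : (d * pdiv t %| d')%N by rewrite Et [(t * d)%N]mulnC dvdn_pmul2l // pdiv_dvd.
have := H _ pp (dvdn_trans dpd' d'n).
rewrite ltNge (le_trans _ d'x) // ler_nat; exact: dvdn_leq.
Qed.

End S.

Lemma arith d c c' e A S L L' p n m : (0 < S)%N -> (0 < c')%N ->
  (c' * L <= L' * c)%N -> (L' <= p)%N -> n = (c * d)%N -> m = (c' * e)%N ->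
  (n <= A * m)%N -> (d * L <= A * S * e * p)%N.
Proof.
  move=> S1 c'0 h2 lp hn hm Hna'.
  rewrite -(leq_pmul2l c'0).
  have s1 : (c' * (d * L) <= d * (L' * c))%N by rewrite mulnCA leq_mul2l h2 orbT.
  apply: (leq_trans s1).
  have s3 : (d * (L' * c) <= A * m * p)%N.
    have -> : (d * (L' * c) = n * L')%N by rewrite hn; lia.
    by apply: leq_mul.
  apply: (leq_trans s3); rewrite hm.
  have -> : (A * (c' * e) * p = c' * (A * e * p))%N by lia.
  rewrite leq_mul2l; apply/orP; right.
  have -> : (A * S * e * p = S * (A * e * p))%N by lia.
  by rewrite leq_pmull.
Qed.

Section Main.
Variables (R : realType) (x : R) (m n a : nat) (f : nat -> nat).
Hypotheses (m0 : (0 < m)%N) (n0 : (0 < n)%N) (Hna : (n <= 2 ^ a * m)%N)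
  (Hf : reducing n m f).

Definition KK d := (a + logn 2 (m %/ f d))%N.
Definition PP d : pred nat := fun k => ((2 ^ k * f d)%N%:R <= x).
Definition kk d := findk (PP d) (KK d).
Definition g d := (2 ^ (kk d) * f d)%N.

Lemma g_in d : d \in Mx x n -> g d \in Mx x (2 ^ a * m).
Proof.
move=> dM; have [dn [dx dmax]] := @Mx_div R x n d n0 dM.
case: Hf => [H1 [H2 [H3 H4]]].
have em := H1 d dn; have ed := H2 d dn.
have e0 : (0 < f d)%N by apply: dvdn_gt0 m0 em.
have hm : m = (m %/ f d * f d)%N by rewrite divnK.
have c'0 : (0 < m %/ f d)%N by rewrite divn_gt0 // dvdn_leq.
have P0 : PP d 0 by rewrite /PP expn0 mul1n; apply: le_trans dx; rewrite ler_nat.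
have Pk := @findk_P (PP d) (KK d) P0.
have kK := findk_le (PP d) (KK d).
have kmax := @findk_max (PP d) (KK d).
have dvK : forall j, (j <= KK d)%N -> (2 ^ j * f d %| 2 ^ a * m)%N.
  move=> j jK; rewrite hm mulnA dvdn_pmul2r //.
  apply: (@dvdn_trans (2 ^ (a + logn 2 (m %/ f d)))); first by rewrite dvdn_exp2l.
  by rewrite expnD dvdn_pmul2l ?expn_gt0 // pfactor_dvdnn.
apply: Mx_in; first by rewrite muln_gt0 expn_gt0 m0.
- exact: dvK.
- exact: Pk.
move=> p pp Hp.
have p1 := prime_gt1 pp.
rewrite leq_eqVlt in kK; case/orP: kK => [/eqP kE|kl].
- have pc' : (p %| m %/ f d)%N.
    move: Hp; rewrite /g /kk kE /KK; set c' := (m %/ f d)%N in hm c'0 *.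
    rewrite hm expnD -!mulnA dvdn_pmul2l ?expn_gt0 // [(f d * p)%N]mulnC mulnA.
    rewrite dvdn_pmul2r //; apply: dvdn_trans; exact: dvdn_mull.
  have d0 : (0 < d)%N by apply: dvdn_gt0 n0 dn.
  have hn : n = (n %/ d * d)%N by rewrite divnK.
  have c0 : (0 < n %/ d)%N by rewrite divn_gt0 // dvdn_leq.
  have := H3 d dn; rewrite /lpf le_min => /andP [h1 h2].
  have l0 := pdiv_gt0 (n %/ d); have l0' := pdiv_gt0 (m %/ f d).
  rewrite ler_pdivrMr ?ltr0n // mul1r ler_nat in h1.
  rewrite ler_pdivrMr ?ltr0n // mulrAC ler_pdivlMr ?ltr0n // -!natrM ler_nat in h2.
  have c1 : (1 < n %/ d)%N.
    have := dvdn_leq c'0 pc'; lia.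
  have lp : (pdiv (m %/ f d) <= p)%N by apply: pdiv_min_dvd.
  have xl : x < (d * pdiv (n %/ d))%:R.
    rewrite ltNge; apply/negP => hx.
    have : (d * pdiv (n %/ d) = d)%N.
      refine (dmax _ _ hx (dvdn_mulr _ (dvdnn _))).
      by rewrite {2}hn [(_ * d)%N]mulnC dvdn_pmul2l // pdiv_dvd.
    have := prime_gt1 (pdiv_prime c1); nia.
  apply: (lt_le_trans xl); rewrite ler_nat /g /kk kE /KK expnD.
  have S1 : (0 < 2 ^ logn 2 (m %/ f d))%N by rewrite expn_gt0.
  apply: (@arith d (n %/ d) (m %/ f d) (f d) (2 ^ a) (2 ^ logn 2 (m %/ f d))
    (pdiv (n %/ d)) (pdiv (m %/ f d)) p n m) => //.
- have nP : ~~ PP d (kk d).+1.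
    by apply/negP => /(kmax _ kl); rewrite ltnn.
  rewrite /PP -ltNge in nP; apply: (lt_le_trans nP); rewrite ler_nat /g.
  by rewrite expnS -mulnA [(2 * _)%N]mulnC leq_mul2l p1 orbT.
Qed.

Lemma key d1 d2 i : d1 \in Mx x n -> d2 \in Mx x n ->
  f d1 = (2 ^ i * f d2)%N -> d1 = d2.
Proof.
move=> M1 M2 Ei.
have [d1n [d1x d1max]] := @Mx_div R x n d1 n0 M1.
have [d2n [d2x d2max]] := @Mx_div R x n d2 n0 M2.
case: Hf => [_ [_ [_ H4]]].
have [] := H4 d1 d2 d1n d2n.
  by exists (Posz i); rewrite Ei natrM natrX.
case=> j Ej.
- have E : d1 = (2 ^ j * d2)%N.
    by apply/eqP; rewrite -(eqr_nat rat) natrM natrX Ej.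
  by apply: d2max d1n d1x _; rewrite E dvdn_mull.
- have E : d2 = (2 ^ j.+1 * d1)%N.
    apply/eqP; rewrite -(eqr_nat rat) natrM natrX Ej mulrA mulfV ?mul1r //.
    by rewrite expf_neq0 // pnatr_eq0.
  by apply/esym; apply: d1max d2n d2x _; rewrite E dvdn_mull.
Qed.

Lemma g_inj : {in Mx x n &, injective g}.
Proof.
move=> d1 d2 M1 M2; rewrite /g => E.
have h1 : (0 < 2 ^ kk d1)%N by rewrite expn_gt0.
have h2 : (0 < 2 ^ kk d2)%N by rewrite expn_gt0.
have [le|lt] := leqP (kk d1) (kk d2).
- apply: (@key _ _ (kk d2 - kk d1) M1 M2).
  apply/eqP; rewrite -(eqn_pmul2l h1) mulnA -expnD (subnKC le).
  by rewrite E.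
- apply/esym; apply: (@key _ _ (kk d1 - kk d2) M2 M1).
  apply/eqP; rewrite -(eqn_pmul2l h2) mulnA -expnD (subnKC (ltnW lt)).
  by rewrite E.
Qed.

Lemma main_ineq : (size (Mx x n) <= size (Mx x (2 ^ a * m)))%N.
Proof.
rewrite -(size_map g); apply: uniq_leq_size.
  by rewrite map_inj_in_uniq ?filter_uniq ?divisors_uniq //; exact: g_inj.
by move=> y /mapP [d dM ->]; apply: g_in.
Qed.

End Main.

Theorem theorem3p5 (m n a : nat) :
  (0 < m)%N -> (0 < n)%N -> reduces n m ->
  (* a is the smallest integer with 2^a m >= n *)
  (n <= 2 ^ a * m)%N ->
  (forall b : int, b < a%:Z -> (2%:R ^ b * m%:R : rat) < n%:R) ->
  forall (R : realType) (x : R), (size (Mx x n) <= size (Mx x (2 ^ a * m)))%N.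
Proof.
move=> m0 n0 [f Hf] Hna _ R x.
exact: (@main_ineq R x m n a f m0 n0 Hna Hf).
Qed.
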